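(* Let $A,B$ be rings and $M$ a $B$-$A$ bimodule. If either (1) $M$ is a separable bimodule, or (2) the evaluation map $\mathrm{ev}_M:M\otimes_A{}^*M\to B$ is injective, then $M$ is a formally smooth bimodule.
   Context: Left $B$-linear maps are written on the right of arguments; ${}^*M:={}_B\mathrm{Hom}(M,B)$ is an $A$-$B$ bimodule via $(m)(afb)=((ma)f)b$; $\mathrm{ev}_M(m\otimes_Af)=(m)f$ is a $B$-bimodule map. $M$ is separable if $\mathrm{ev}_M$ is a split epimorphism of $B$-bimodules. $\mathcal{E}_{M,B}$ is the class of $B$-bimodule maps $f:Y\to Y'$ such that ${}_B\mathrm{Hom}(M,f):{}_B\mathrm{Hom}(M,Y)\to{}_B\mathrm{Hom}(M,Y')$ has a right inverse as an $A$-$B$ bimodule map. A $B$-bimodule $P$ is $\mathcal{E}_{M,B}$-projective if for every $f:Y\to Y'$ in $\mathcal{E}_{M,B}$ every $B$-bimodule map $P\to Y'$ factors through $f$. $M$ is a formally smooth bimodule if $\mathrm{Ker}(\mathrm{ev}_M)$ is an $\mathcal{E}_{M,B}$-projective $B$-bimodule. *)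

(* Defs.v *)
From HB Require Import structures.
From mathcomp Require Import all_boot all_algebra.
Set Implicit Arguments. Unset Strict Implicit. Unset Printing Implicit Defensive.
Import GRing.Theory.
Local Open Scope ring_scope.

Definition additive_fun (U V : zmodType) (g : U -> V) : Prop :=
  forall x y, g (x + y) = g x + g y.

Record bimod_law (R S : pzRingType) (V : zmodType)
    (la : R -> V -> V) (ra : V -> S -> V) : Prop := BimodLaw {
  la_addr : forall r x y, la r (x + y) = la r x + la r y;
  la_addl : forall r r' x, la (r + r') x = la r x + la r' x;
  la_mul  : forall r r' x, la (r * r') x = la r (la r' x);
  la_one  : forall x, la 1 x = x;
  ra_addl : forall x y s, ra (x + y) s = ra x s + ra y s;
  ra_addr : forall x s s', ra x (s + s') = ra x s + ra x s';
  ra_mul  : forall x s s', ra x (s * s') = ra (ra x s) s';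
  ra_one  : forall x, ra x 1 = x;
  la_ra   : forall r x s, la r (ra x s) = ra (la r x) s }.

Definition bimod_map (R S : pzRingType) (U V : zmodType)
    (laU : R -> U -> U) (raU : U -> S -> U)
    (laV : R -> V -> V) (raV : V -> S -> V) (g : U -> V) : Prop :=
  [/\ additive_fun g,
      forall r x, g (laU r x) = laV r (g x)
    & forall x s, g (raU x s) = raV (g x) s].

Definition bimod_map_on (R S : pzRingType) (U V : zmodType) (P : U -> Prop)
    (laU : R -> U -> U) (raU : U -> S -> U)
    (laV : R -> V -> V) (raV : V -> S -> V) (g : U -> V) : Prop :=
  [/\ forall x y, P x -> P y -> g (x + y) = g x + g y,
      forall r x, P x -> g (laU r x) = laV r (g x)
    & forall x s, P x -> g (raU x s) = raV (g x) s].

Definition regl (B : pzRingType) : B -> B -> B := fun b x => b * x.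
Definition regr (B : pzRingType) : B -> B -> B := fun x b => x * b.

Section Bimodules.
Context (A B : pzRingType) (M : zmodType)
        (laM : B -> M -> M) (raM : M -> A -> M).

Definition leftlin (Y : zmodType) (laY : B -> Y -> Y) (g : M -> Y) : Prop :=
  additive_fun g /\ forall b m, g (laM b m) = laY b (g m).

(** elements of *M = _B Hom(M, B) *)
Definition dual_elt (f : M -> B) : Prop := leftlin (@regl B) f.

(** A-balanced biadditive maps  M x *M -> Z ;  (m)(a f) = (m a) f *)
Definition balanced (Z : zmodType) (phi : M -> (M -> B) -> Z) : Prop :=
  [/\ forall m m' f, dual_elt f -> phi (m + m') f = phi m f + phi m' f,
      forall m f f', dual_elt f -> dual_elt f' ->
        phi m (fun x => f x + f' x) = phi m f + phi m f'
    & forall m a f, dual_elt f -> phi (raM m a) f = phi m (fun x => f (raM x a))].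

(** (T, t) is the tensor product M (x)_A *M, t m f = m (x) f *)
Definition is_tensor_dual (T : zmodType) (t : M -> (M -> B) -> T) : Prop :=
  balanced t /\
  forall (Z : zmodType) (phi : M -> (M -> B) -> Z), balanced phi ->
    exists psi : T -> Z,
      [/\ additive_fun psi,
          forall m f, dual_elt f -> psi (t m f) = phi m f
        & forall psi' : T -> Z, additive_fun psi' ->
            (forall m f, dual_elt f -> psi' (t m f) = phi m f) ->
            forall x, psi' x = psi x].

Definition tensor_bimod (T : zmodType) (t : M -> (M -> B) -> T)
    (laT : B -> T -> T) (raT : T -> B -> T) : Prop :=
  [/\ bimod_law laT raT,
      forall b m f, dual_elt f -> laT b (t m f) = t (laM b m) f
    & forall m f b, dual_elt f -> raT (t m f) b = t m (fun x => f x * b)].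

Definition is_ev (T : zmodType) (t : M -> (M -> B) -> T) (ev : T -> B) : Prop :=
  additive_fun ev /\ forall m f, dual_elt f -> ev (t m f) = f m.

Definition separable_bimod (T : zmodType) (laT : B -> T -> T)
    (raT : T -> B -> T) (ev : T -> B) : Prop :=
  exists sigma : B -> T,
    bimod_map (@regl B) (@regr B) laT raT sigma /\ forall b, ev (sigma b) = b.

(** f : Y -> Y' (a B-bimodule map) lies in E_{M,B}: _B Hom(M, f) has a right
    inverse s which is an A-B-bimodule map, where the A-B action on
    _B Hom(M, Y) is (m)(a g b) = ((m a) g) b. *)
Definition in_E (Y Y' : zmodType) (laY : B -> Y -> Y) (raY : Y -> B -> Y)
    (laY' : B -> Y' -> Y') (raY' : Y' -> B -> Y') (f : Y -> Y') : Prop :=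
  bimod_map laY raY laY' raY' f /\
  exists s : (M -> Y') -> (M -> Y),
    forall g, leftlin laY' g ->
      [/\ leftlin laY (s g),
          forall g', leftlin laY' g' ->
            forall m, s (fun x => g x + g' x) m = s g m + s g' m,
          forall a m, s (fun x => g (raM x a)) m = s g (raM m a),
          forall b m, s (fun x => raY' (g x) b) m = raY (s g m) b
        & forall m, f (s g m) = g m].

Definition E_projective (T : zmodType) (P : T -> Prop)
    (laT : B -> T -> T) (raT : T -> B -> T) : Prop :=
  forall (Y Y' : zmodType) (laY : B -> Y -> Y) (raY : Y -> B -> Y)
         (laY' : B -> Y' -> Y') (raY' : Y' -> B -> Y'),
    bimod_law laY raY -> bimod_law laY' raY' ->
    forall f : Y -> Y', in_E laY raY laY' raY' f ->
    forall h : T -> Y', bimod_map_on P laT raT laY' raY' h ->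
    exists g : T -> Y,
      bimod_map_on P laT raT laY raY g /\ forall x, P x -> f (g x) = h x.

Definition formally_smooth_bimod (T : zmodType) (laT : B -> T -> T)
    (raT : T -> B -> T) (ev : T -> B) : Prop :=
  E_projective (fun x => ev x = 0) laT raT.

End Bimodules.

(* Main.v *)
Require Import Defs.
From mathcomp Require Import all_boot all_algebra.
From Stdlib Require Import FunctionalExtensionality.
Set Implicit Arguments. Unset Strict Implicit.
Import GRing.Theory.
Local Open Scope ring_scope.

Lemma add0f (U V : zmodType) (g : U -> V) : additive_fun g -> g 0 = 0.
Proof. move=> hg; apply: (@addrI _ (g 0)); by rewrite -hg !addr0. Qed.

Lemma addNf (U V : zmodType) (g : U -> V) : additive_fun g -> forall x, g (- x) = - g x.
Proof. move=> hg x; apply/eqP; rewrite -subr_eq0 opprK addrC -hg subrr.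
by rewrite (add0f hg). Qed.

Lemma addBf (U V : zmodType) (g : U -> V) : additive_fun g -> forall x y, g (x - y) = g x - g y.
Proof. by move=> hg x y; rewrite hg (addNf hg). Qed.

Lemma tensor_ext (A B : pzRingType) (M : zmodType)
    (laM : B -> M -> M) (raM : M -> A -> M)
    (T : zmodType) (t : M -> (M -> B) -> T) :
  is_tensor_dual laM raM t ->
  forall (Z : zmodType) (u1 u2 : T -> Z), additive_fun u1 -> additive_fun u2 ->
  (forall m f, dual_elt laM f -> u1 (t m f) = u2 (t m f)) -> forall x, u1 x = u2 x.
Proof.
move=> [[b1 b2 b3] hU] Z u1 u2 a1 a2 hgen x.
have hb : balanced laM raM (fun m f => u1 (t m f)).
  split.
  - by move=> m m' f df; rewrite b1 // a1.
  - by move=> m f f' df df'; rewrite b2 // a1.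
  - by move=> m a f df; rewrite b3.
have [psi [_ pg pu]] := hU Z _ hb.
rewrite (pu u1 a1); last by [].
by rewrite (pu u2 a2) // => m f df; rewrite hgen.
Qed.

Theorem mainTheorem6 (A B : pzRingType) (M : zmodType)
    (laM : B -> M -> M) (raM : M -> A -> M)
    (hM : bimod_law laM raM)
    (T : zmodType) (t : M -> (M -> B) -> T)
    (laT : B -> T -> T) (raT : T -> B -> T) (ev : T -> B)
    (hT : is_tensor_dual laM raM t)
    (hTb : tensor_bimod laM t laT raT)
    (hev : is_ev laM t ev) :
  (separable_bimod laT raT ev \/ (forall x y : T, ev x = ev y -> x = y)) ->
  formally_smooth_bimod laM raM laT raT ev.
Proof.
have [evadd evgen] := hev.
have ev0 := add0f evadd.
case=> [[sigma [[sadd sl sr] sev]] | inj]; last first.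
  move=> Y Y' laY raY laY' raY' hY hY' f [[fadd _ _] _] h [hadd _ _].
  have h0 : h 0 = 0.
    by apply: (@addrI _ (h 0)); rewrite -hadd // !addr0.
  have x0 : forall x, ev x = 0 -> x = 0 by move=> x hx; apply: inj; rewrite hx ev0.
  exists (fun _ => 0); split.
  - split.
    + by move=> *; rewrite addr0.
    + move=> r x _; rewrite (@add0f _ _ (laY r)) // => a b.
      by rewrite (la_addr hY).
    + move=> x s _; rewrite (@add0f _ _ (raY ^~ s)) // => a b.
      by rewrite (ra_addl hY).
  - by move=> x /x0 ->; rewrite (add0f fadd) h0.
have [[b1 b2 b3] _] := hT.
have [lawT tl tr] := hTb.
have dual_r : forall f b, dual_elt laM f -> dual_elt laM (fun x => f x * b).
  move=> f b [fa fl]; split.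
  - by move=> x y; rewrite fa mulrDl.
  - by move=> c m; rewrite fl /regl mulrA.
have laTadd : forall b, additive_fun (laT b) by move=> b x y; rewrite (la_addr lawT).
have raTadd : forall b, additive_fun (raT ^~ b) by move=> b x y; rewrite (ra_addl lawT).
have evl : forall b x, ev (laT b x) = b * ev x.
  move=> b; apply: (tensor_ext hT).
  - by move=> x y; rewrite laTadd evadd.
  - by move=> x y; rewrite evadd mulrDr.
  - by move=> m f df; rewrite tl // !evgen //; case: df => _ ->.
have evr : forall b x, ev (raT x b) = ev x * b.
  move=> b; apply: (tensor_ext hT).
  - by move=> x y; rewrite raTadd evadd.
  - by move=> x y; rewrite evadd mulrDl.
  - by move=> m f df; rewrite tr // !evgen //; exact: dual_r.
move=> Y Y' laY raY laY' raY' hY hY' f [[fadd fl fr] [s hs]] h [hadd hl hr].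
pose p x := x - sigma (ev x).
have Pp : forall x, ev (p x) = 0.
  by move=> x; rewrite /p (addBf evadd) sev subrr.
have padd : additive_fun p.
  by move=> x y; rewrite /p evadd sadd opprD addrACA.
have pl : forall b x, p (laT b x) = laT b (p x).
  by move=> b x; rewrite /p evl -[b * _]/(regl b (ev x)) sl (addBf (laTadd b)).
have pr : forall b x, p (raT x b) = raT (p x) b.
  by move=> b x; rewrite /p evr -[_ * b]/(regr (ev x) b) sr (addBf (raTadd b)).
pose h' x := h (p x).
have h'add : additive_fun h' by move=> x y; rewrite /h' padd hadd.
have h'l : forall b x, h' (laT b x) = laY' b (h' x) by move=> b x; rewrite /h' pl hl.
have h'r : forall b x, h' (raT x b) = raY' (h' x) b by move=> b x; rewrite /h' pr hr.
pose gphi (phi : M -> B) := fun x => h' (t x phi).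
have gll : forall phi, dual_elt laM phi -> leftlin laM laY' (gphi phi).
  move=> phi dp; split.
  - by move=> x y; rewrite /gphi b1 // h'add.
  - by move=> b m; rewrite /gphi -tl // h'l.
pose Phi m phi := s (gphi phi) m.
have hb : balanced laM raM Phi.
  split.
  - move=> m m' phi dp; rewrite /Phi.
    by have [[sa _] _ _ _ _] := hs _ (gll _ dp); rewrite sa.
  - move=> m phi phi' dp dp'; rewrite /Phi.
    have -> : gphi (fun x => phi x + phi' x) = fun x => gphi phi x + gphi phi' x.
      by apply: functional_extensionality => x; rewrite /gphi b2 // h'add.
    have [_ hs2 _ _ _] := hs _ (gll _ dp).
    by rewrite hs2 //; exact: gll.
  - move=> m a phi dp; rewrite /Phi.
    have [_ _ ha _ _] := hs _ (gll _ dp).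
    rewrite -ha; congr (s _ m); apply: functional_extensionality => x.
    by rewrite /gphi b3.
have [_ hU] := hT.
have [psi [padd' pgen _]] := hU _ _ hb.
have psil : forall b x, psi (laT b x) = laY b (psi x).
  move=> b; apply: (tensor_ext hT).
  - by move=> x y; rewrite laTadd padd'.
  - by move=> x y; rewrite padd' (la_addr hY).
  - move=> m phi dp; rewrite tl // !pgen // /Phi.
    by have [[_ ->] _ _ _ _] := hs _ (gll _ dp).
have psir : forall b x, psi (raT x b) = raY (psi x) b.
  move=> b; apply: (tensor_ext hT).
  - by move=> x y; rewrite raTadd padd'.
  - by move=> x y; rewrite padd' (ra_addl hY).
  - move=> m phi dp; rewrite tr // !pgen //; last exact: dual_r. rewrite /Phi.
    have -> : gphi (fun x => phi x * b) = fun x => raY' (gphi phi x) b.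
      by apply: functional_extensionality => x; rewrite /gphi -tr // h'r.
    by have [_ _ _ -> _] := hs _ (gll _ dp).
have fpsi : forall x, f (psi x) = h' x.
  apply: (tensor_ext hT).
  - by move=> x y; rewrite padd' fadd.
  - exact: h'add.
  - move=> m phi dp; rewrite pgen // /Phi.
    by have [_ _ _ _ ->] := hs _ (gll _ dp).
exists psi; split.
- by split=> *; [rewrite padd' | rewrite psil | rewrite psir].
- move=> x hx; rewrite fpsi /h' /p hx.
  by rewrite (add0f sadd) subr0.
Qed.
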